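(* Let $D$ be an instance all of whose tuples are endogenous, let $\mathcal{Q}$ be a monotone query, and let $\bar a\in\mathcal{Q}(D)$. Then $(D,\bar a)\in\mathcal{VSEFP}(\mathcal{Q})$ (i.e. there exists $D'\subseteq D$ with $\mathcal{Q}(D')=\mathcal{Q}(D)\smallsetminus\{\bar a\}$) if and only if $\mathit{vc\text{-}Causes}(D,\mathcal{Q}(\bar a))\neq\emptyset$.
   Context: A query $\mathcal{Q}$ is monotone if $D_1\subseteq D_2$ implies $\mathcal{Q}(D_1)\subseteq\mathcal{Q}(D_2)$; $D\models\mathcal{Q}(\bar b)$ means $\bar b\in\mathcal{Q}(D)$. Here $D^n=D$. Let $\mathcal{Q}(D)=\{\bar a_1,\dots,\bar a_n\}$ with $\bar a=\bar a_k$. A tuple $\tau\in D^n$ is a view-conditioned counterfactual cause for $\bar a_k$ in an instance $D''$ if $D''\smallsetminus\{\tau\}\not\models\mathcal{Q}(\bar a_k)$ and $D''\smallsetminus\{\tau\}\models\mathcal{Q}(\bar a_i)$ for all $i\neq k$ (where $\bar a_1,\dots,\bar a_n$ are the answers on the original $D$). $\tau$ is a view-conditioned cause for $\bar a_k$ if there is $\Gamma\subseteq D^n$ such that $\tau$ is a view-conditioned counterfactual cause for $\bar a_k$ in $D\smallsetminus\Gamma$. $\mathit{vc\text{-}Causes}(D,\mathcal{Q}(\bar a_k))$ is the set of view-conditioned causes. $\mathcal{VSEFP}(\mathcal{Q})=\{(D,\bar a): \bar a\in\mathcal{Q}(D) \text{ and there is } D'\subseteq D \text{ with } \mathcal{Q}(D)\smallsetminus\{\bar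 a\}=\mathcal{Q}(D')\}$. *)

(* Defs.v *)
From mathcomp Require Import all_boot.
Set Implicit Arguments. Unset Strict Implicit. Unset Printing Implicit Defensive.

Definition monotone (Tup Ans : finType) (Q : {set Tup} -> {set Ans}) : Prop :=
  forall D1 D2 : {set Tup}, D1 \subset D2 -> Q D1 \subset Q D2.

Definition vc_counterfactual_cause (Tup Ans : finType) (Q : {set Tup} -> {set Ans})
  (D D'' : {set Tup}) (a : Ans) (tau : Tup) : Prop :=
  a \notin Q (D'' :\ tau) /\
  (forall b, b \in Q D -> b != a -> b \in Q (D'' :\ tau)).

(* Endogenous tuples Dn: tau in Dn is a view-conditioned cause for a if there is
   Gamma subset of Dn with tau a vc-counterfactual cause in D \ Gamma. *)
Definition vc_cause (Tup Ans : finType) (Q : {set Tup} -> {set Ans})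
  (D Dn : {set Tup}) (a : Ans) (tau : Tup) : Prop :=
  tau \in Dn /\
  exists Gamma : {set Tup}, Gamma \subset Dn /\
    vc_counterfactual_cause Q D (D :\: Gamma) a tau.

Definition vc_Causes (Tup Ans : finType) (Q : {set Tup} -> {set Ans})
  (D Dn : {set Tup}) (a : Ans) : Tup -> Prop :=
  fun tau => vc_cause Q D Dn a tau.

Definition nonempty (T : Type) (S : T -> Prop) : Prop := exists x, S x.

Definition VSEFP (Tup Ans : finType) (Q : {set Tup} -> {set Ans})
  (D : {set Tup}) (a : Ans) : Prop :=
  a \in Q D /\ exists D' : {set Tup}, D' \subset D /\ Q D' = Q D :\ a.

(* Main.v *)
Require Import Defs.
From mathcomp Require Import all_boot.

(* All tuples endogenous: the endogenous set D^n is D itself. *)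
Theorem proposition9 (Tup Ans : finType) (Q : {set Tup} -> {set Ans})
  (D : {set Tup}) (a : Ans) :
  monotone Q -> a \in Q D ->
  (VSEFP Q D a <-> nonempty (vc_Causes Q D D a)).
Proof.
move=> mon aQ; split.
- move=> [_ [D' [sD' eQ]]].
  have [tau tD tD'] : exists2 tau, tau \in D & tau \notin D'.
    apply/exists_inP; apply: contraT; rewrite negb_exists_in => /forall_inP H.
    have eD : D' = D.
      apply/eqP; rewrite eqEsubset sD' /=; apply/subsetP => x xD.
      by have := H x xD; rewrite negbK.
    by move: aQ; rewrite -eD eQ setD11.
  have eDD : (D :\: (D :\: (D' :|: [set tau]))) :\ tau = D'.
    apply/setP => x; rewrite !inE.
    case: (eqVneq x tau) => [->|_] /=; first by rewrite (negbTE tD').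
    case xD': (x \in D'); rewrite ?andbT ?andbF /=.
      by rewrite (subsetP sD' x xD').
    by case: (x \in D).
  rewrite /nonempty; apply: (@ex_intro _ _ tau); rewrite /vc_Causes /vc_cause; split => //; exists (D :\: (D' :|: [set tau])); split.
    by apply: subsetDl.
  rewrite /vc_counterfactual_cause eDD eQ; split; first by rewrite setD11.
  by move=> b bQ ba; rewrite !inE ba.
- move=> [tau [tD [G [sG [na others]]]]]; split => //.
  exists ((D :\: G) :\ tau); split.
    by apply: subset_trans (subsetDl _ _) (subsetDl _ _).
  apply/setP => b; rewrite !inE.
  case: (eqVneq b a) => [->|ba] /=; first by rewrite (negbTE na).
  apply/idP/idP => [bQ|bQ]; last by apply: others.
  apply: (subsetP (mon _ _ _)) bQ.
  by apply: subset_trans (subsetDl _ _) (subsetDl _ _).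
Qed.
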